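(* Let $p \geq 1$, let $\boldsymbol \Omega$ be a $p\times p$ positive definite matrix and let $\boldsymbol \Psi$ be a $p\times p$ non-diagonal positive definite matrix with all diagonal entries equal to $1$. Let $\boldsymbol \beta$ have the structured product normal (SPN) prior with parameters $\boldsymbol \Omega, \boldsymbol \Psi$, with marginal density $$p(\boldsymbol b \mid \boldsymbol \Psi, \boldsymbol \Omega) = \int_{\mathbb{R}^p} \Big(\prod_{i=1}^p \frac{1}{|s_i|}\Big)\, \phi_{\boldsymbol \Omega}(\boldsymbol b / \boldsymbol s)\, \phi_{\boldsymbol \Psi}(\boldsymbol s)\, d\boldsymbol s \in [0,+\infty],$$ where $\phi_{\boldsymbol A}$ denotes the $\text{normal}(\boldsymbol 0, \boldsymbol A)$ density and $\boldsymbol b/\boldsymbol s$ is elementwise division. If $\boldsymbol b \in \mathbb{R}^p$ satisfies $b_j = 0$ for some $j \in \{1,\dots,p\}$, then $p(\boldsymbol b \mid \boldsymbol \Psi, \boldsymbol \Omega) = +\infty$.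
   Context: The SPN prior is the distribution of $\boldsymbol \beta = \boldsymbol s \circ \boldsymbol z$ (elementwise product), where $\boldsymbol z \sim \text{normal}(\boldsymbol 0, \boldsymbol \Omega)$ and $\boldsymbol s \sim \text{normal}(\boldsymbol 0, \boldsymbol \Psi)$ are independent; the displayed integral is the resulting marginal (joint) prior density of $\boldsymbol \beta$ at $\boldsymbol b$, allowed to take the value $+\infty$. *)

(* Defs.v *)
From HB Require Import structures.
From mathcomp Require Import all_boot all_order all_algebra.
From mathcomp Require Import all_classical all_reals all_analysis.
Set Implicit Arguments. Unset Strict Implicit. Unset Printing Implicit Defensive.
Import Order.TTheory GRing.Theory Num.Theory.
Local Open Scope ring_scope.

Section Defs.
Variable R : realType.

Definition posdef (p : nat) (A : 'M[R]_p) : Prop :=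
  A^T = A /\ forall x : 'rV[R]_p, x != 0 -> 0 < (x *m A *m x^T) 0 0.

Definition normal_pdf (p : nat) (A : 'M[R]_p) (x : 'rV[R]_p) : R :=
  (Num.sqrt ((2 * pi) ^+ p * \det A))^-1 *
  expR (- (x *m invmx A *m x^T) 0 0 / 2).

(* Lebesgue integral over R^n of a function of n real coordinates, defined as
   the iterated integral (coordinate 0 outermost).  For the nonnegative
   measurable integrands considered here this coincides (Tonelli) with the
   integral against n-dimensional Lebesgue measure. *)
Fixpoint int_Rn (n : nat) : (('I_n -> R) -> \bar R) -> \bar R :=
  match n with
  | 0 => fun f => f (fun i => 0)
  | n'.+1 => fun f =>
      (\int[@lebesgue_measure R]_(x in [set: R])
         int_Rn (fun t : 'I_n' -> R =>
            f (fun i : 'I_n'.+1 =>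
                 if unlift ord0 i is Some j then t j else x)))%E
  end.

Definition int_rV (p : nat) (f : 'rV[R]_p -> \bar R) : \bar R :=
  int_Rn (fun s : 'I_p -> R => f (\row_i s i)).

(* marginal density of the SPN prior beta = s o z, z ~ N(0,Omega), s ~ N(0,Psi):
   p(b | Psi, Omega) = int (prod_i 1/|s_i|) phi_Omega(b/s) phi_Psi(s) ds *)
Definition spn_density (p : nat) (Psi Omega : 'M[R]_p) (b : 'rV[R]_p) : \bar R :=
  int_rV (fun s : 'rV[R]_p =>
    ((\prod_(i < p) `|s 0 i|^-1) *
     normal_pdf Omega (\row_i (b 0 i / s 0 i)) *
     normal_pdf Psi s)%:E).

End Defs.

(* Main.v *)
Require Import Defs.
From HB Require Import structures.
From mathcomp Require Import all_boot all_order all_algebra.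
From mathcomp Require Import all_classical all_reals all_analysis.
Import Order.TTheory GRing.Theory Num.Theory.
Local Open Scope ring_scope.
From mathcomp Require Import ring lra.
From mathcomp Require polyrcf.
Set Implicit Arguments. Unset Strict Implicit. Unset Printing Implicit Defensive.
Import numFieldNormedType.Exports.
Local Open Scope classical_set_scope.

Lemma posdef_det_gt0 (R : realType) (p : nat) (A : 'M[R]_p) :
  posdef A -> 0 < \det A.
Proof.
move=> [_ pd].
set Q := char_poly (- A).
have lcQ : lead_coef Q = 1 by apply/eqP; exact: char_poly_monic.
have Q0 : Q.[0] = \det A.
  rewrite horner_coef0 char_poly_det -(scaleN1r A) detZ mulrA -exprMn.
  by rewrite mulrNN mulr1 expr1n mul1r.
rewrite ltNge; apply/negP => dle.
have [n Hn] : exists n, forall x, n <= x -> lead_coef Q <= Q.[x] by apply: polyrcf.poly_pinfty_gt_lc; rewrite lcQ ltr01.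
have [x /andP[x0 _] rx] : exists2 x, 0 <= x <= Num.max n 0 & root Q x.
  apply: (@Num.poly_ivt R); first by rewrite le_max lexx orbT.
  rewrite Q0 dle /=; apply: le_trans (Hn _ _); first by rewrite lcQ ler01.
  by rewrite le_max lexx.
have : eigenvalue (- A) x by rewrite eigenvalue_root_char.
move=> /eigenvalueP [v hv vn0].
have := pd v vn0.
rewrite -[A]opprK mulmxN hv mulNmx -scalemxAl mxE mxE.
rewrite ltNge; apply/negP; rewrite oppr_le0 mulr_ge0 //.
rewrite mxE; apply: sumr_ge0 => i _; rewrite !mxE -expr2; exact: sqr_ge0.
Qed.
Section S6.
Local Open Scope ereal_scope.

Lemma le_int_T (R : realType) (f g : R -> \bar R) :
  (forall x, 0 <= f x) -> (forall x, f x <= g x) ->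
  \int[@lebesgue_measure R]_(x in [set: R]) f x <=
  \int[@lebesgue_measure R]_(x in [set: R]) g x.
Proof.
move=> f0 fg.
have g0 x : 0 <= g x by apply: le_trans (fg x).
rewrite !ge0_integralTE //; apply: ereal_sup_le.
move=> _ [h hf <-]; exists h => //= x; exact: le_trans (hf x) (fg x).
Qed.

Lemma int_Rn_ge0 (R : realType) n (f : ('I_n -> R) -> \bar R) :
  (forall t, 0 <= f t) -> 0 <= int_Rn f.
Proof.
elim: n f => [|n IH] f f0 /=; first exact: f0.
by apply: integral_ge0 => x _; apply: IH.
Qed.

Lemma le_int_Rn (R : realType) n (f g : ('I_n -> R) -> \bar R) :
  (forall t, 0 <= f t) -> (forall t, f t <= g t) -> int_Rn f <= int_Rn g.
Proof.
elim: n f g => [|n IH] f g f0 fg /=; first exact: fg.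
apply: le_int_T => x; first by apply: int_Rn_ge0.
by apply: IH.
Qed.

Lemma int_Rn_prod (R : realType) n (g : 'I_n -> R -> R) (G : 'I_n -> R) (k : R) :
  (0 <= k)%R -> (forall i x, (0 <= g i x)%R) ->
  (forall i, measurable_fun [set: R] (g i)) -> (forall i, (0 <= G i)%R) ->
  (forall i, \int[@lebesgue_measure R]_(x in [set: R]) (g i x)%:E = (G i)%:E) ->
  int_Rn (fun t => (k * \prod_i g i (t i))%:E) = (k * \prod_i G i)%:E.
Proof.
elim: n g G k => [|n IH] g G k k0 g0 mg G0 iG /=; first by rewrite !big_ord0.
have inner x : int_Rn (fun t : 'I_n -> R => (k * \prod_(i < n.+1) g i
     (if unlift ord0 i is Some j then t j else x))%:E) =
     ((k * g ord0 x) * \prod_(i < n) G (lift ord0 i))%:E.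
  rewrite -(IH (fun i => g (lift ord0 i)) (fun i => G (lift ord0 i)) (k * g ord0 x)%R).
  - congr int_Rn; apply: funext => t; congr (_%:E).
    rewrite big_ord_recl unlift_none mulrA; congr (_ * _)%R.
    by apply: eq_bigr => i _; rewrite liftK.
  - by rewrite mulr_ge0.
  - by move=> i; apply: g0.
  - by move=> i; apply: mg.
  - by move=> i; apply: G0.
  - by move=> i; apply: iG.
transitivity (\int[@lebesgue_measure R]_(x in [set: R])
   ((k * \prod_(i < n) G (lift ord0 i))%:E * (g ord0 x)%:E)).
  by apply: eq_integral => x _; rewrite inner -EFinM mulrAC.
rewrite ge0_integralZl_EFin //.
- have -> := iG ord0.
  rewrite -EFinM big_ord_recl; apply: congr1.
  by rewrite -mulrA [(_ * G ord0)%R]mulrC.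
- by move=> x _; rewrite lee_fin.
- by apply/measurable_realfun.measurable_EFinP; apply: mg.
- by rewrite mulr_ge0 // prodr_ge0 // => i _; apply: G0.
Qed.

End S6.
Lemma int_inv (R : realType) (e : R) : 0 < e < 1 ->
  (\int[@lebesgue_measure R]_(x in `[e, 1%R]) (x^-1)%:E)%E = (- ln e)%:E.
Proof.
move=> /andP[e0 e1].
have ipos (x : R) : x \in `[e, 1]%R -> (0 < x)%R.
  by rewrite in_itv /= => /andP[ex _]; apply: lt_le_trans ex.
rewrite (@continuous_FTC2 R (fun x : R => x^-1) (@ln R)) //.
- by rewrite ln1 -EFinB sub0r.
- apply: continuous_in_subspaceT => x xin; apply: inv_continuous.
  by move: xin; rewrite inE /= in_itv /= => /andP[ex _]; rewrite gt_eqF // (lt_le_trans e0 ex).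
- split.
  + move=> x xin; have := @is_derive1_ln R x.
    have x0 : 0 < x by apply: ipos; apply: subset_itv_oo_cc.
    by move=> /(_ x0) H; apply: ex_derive.
  + by apply: cvg_at_right_filter; apply: continuous_ln.
  + by apply: cvg_at_left_filter; apply: continuous_ln.
- move=> x xin.
  have x0 : 0 < x by apply: ipos; apply: subset_itv_oo_cc.
  rewrite derive1E; have := @is_derive1_ln R x x0.
  by move=> H; apply: derive_val.
Qed.

Lemma int_patch (R : realType) (D : set R) (h : R -> R) :
  (\int[@lebesgue_measure R]_(x in [set: R]) ((h \_ D) x)%:E)%E =
  (\int[@lebesgue_measure R]_(x in D) (h x)%:E)%E.
Proof.
rewrite [RHS]integral_mkcond; apply: eq_integral => x _.
by rewrite /patch; case: ifP.
Qed.

Lemma cont_inv (R : realType) (e : R) : 0 < e ->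
  {within `[e, 1], continuous (fun x : R => x^-1)}.
Proof.
move=> e0; apply: continuous_in_subspaceT => x xin; apply: inv_continuous.
by move: xin; rewrite inE /= in_itv /= => /andP[ex _]; rewrite gt_eqF // (lt_le_trans e0 ex).
Qed.

Definition g1 (R : realType) : R -> R := (cst (2^-1 : R)) \_ `[1, 2].
Definition gj (R : realType) (e : R) : R -> R := (fun x : R => x^-1) \_ `[e, 1].

Lemma g1_meas (R : realType) : measurable_fun [set: R] (@g1 R).
Proof. by apply/(measurable_restrictT _ _).1. Qed.

Lemma gj_meas (R : realType) (e : R) : 0 < e -> measurable_fun [set: R] (@gj R e).
Proof.
move=> e0; apply/(measurable_restrictT _ _).1 => //.
by apply: measurable_realfun.subspace_continuous_measurable_fun => //; apply: cont_inv.
Qed.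

Lemma g1_int (R : realType) :
  (\int[@lebesgue_measure R]_(x in [set: R]) (@g1 R x)%:E)%E = (2^-1)%:E.
Proof.
rewrite int_patch.
have := @integral_cst _ _ _ (@lebesgue_measure R) _ (measurable_itv `[(1:R), 2]%R) (2^-1)%:E.
rewrite /cst /= => ->; rewrite lebesgue_measure_itv /= lte_fin ifT; last by rewrite ltr1n.
by rewrite -EFinB -EFinM; congr EFin; rewrite (_ : 2 - 1 = 1) ?mulr1 //; ring.
Qed.

Lemma gj_int (R : realType) (e : R) : 0 < e < 1 ->
  (\int[@lebesgue_measure R]_(x in [set: R]) (@gj R e x)%:E)%E = (- ln e)%:E.
Proof. by move=> he; rewrite int_patch int_inv. Qed.

Lemma g1_ge0 (R : realType) x : 0 <= @g1 R x.
Proof. by rewrite /g1 /patch; case: ifP => //= _; rewrite invr_ge0. Qed.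

Lemma gj_ge0 (R : realType) (e : R) x : 0 < e -> 0 <= @gj R e x.
Proof.
move=> e0; rewrite /gj /patch; case: ifP => // xin; move: xin.
by rewrite inE /= in_itv /= => /andP[ex _]; rewrite invr_ge0 (le_trans (ltW e0) ex).
Qed.
Definition qbound (R : realType) p (M : 'M[R]_p) := \sum_l \sum_i `|M i l|.
Definition cpdf (R : realType) p (A : 'M[R]_p) (B : R) :=
  (Num.sqrt ((2 * pi) ^+ p * \det A))^-1 * expR (- (B ^+ 2 * qbound (invmx A)) / 2).

Lemma pdf_ge0 (R : realType) p (A : 'M[R]_p) x : 0 <= Defs.normal_pdf A x.
Proof. by rewrite /Defs.normal_pdf mulr_ge0 // ?invr_ge0 ?sqrtr_ge0 // expR_ge0. Qed.

Lemma cpdf_gt0 (R : realType) p (A : 'M[R]_p) B : 0 < \det A -> 0 < cpdf A B.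
Proof.
move=> d0; rewrite /cpdf mulr_gt0 ?expR_gt0 // invr_gt0 sqrtr_gt0 mulr_gt0 //.
by rewrite exprn_gt0 // mulr_gt0 // pi_gt0.
Qed.

Lemma quad_le (R : realType) p (M : 'M[R]_p) (x : 'rV[R]_p) B : 0 <= B ->
  (forall i, `|x 0 i| <= B) -> (x *m M *m x^T) 0 0 <= B ^+ 2 * qbound M.
Proof.
move=> B0 hx; apply: le_trans (ler_norm _) _.
rewrite !mxE; apply: le_trans (ler_norm_sum _ _ _) _.
rewrite /qbound mulr_sumr; apply: ler_sum => l _; rewrite !mxE normrM.
apply: le_trans (ler_pM (normr_ge0 _) (normr_ge0 _) (ler_norm_sum _ _ _) (hx l)) _.
rewrite mulr_suml mulr_sumr; apply: ler_sum => i _; rewrite normrM.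
have h : `|x 0 i| * `|M i l| <= B * `|M i l| by apply: ler_wpM2r.
by apply: le_trans (ler_wpM2r B0 h) _; rewrite expr2 mulrAC.
Qed.

Lemma pdf_lb (R : realType) p (A : 'M[R]_p) (x : 'rV[R]_p) B : 0 <= B ->
  (forall i, `|x 0 i| <= B) -> cpdf A B <= Defs.normal_pdf A x.
Proof.
move=> B0 hx; rewrite /cpdf /Defs.normal_pdf ler_wpM2l ?invr_ge0 ?sqrtr_ge0 //.
rewrite ler_expR; have := quad_le (invmx A) B0 hx; lra.
Qed.

Theorem proposition2p1 (R : realType) (p : nat) (Omega Psi : 'M[R]_p) :
  (0 < p)%N ->
  posdef Omega ->
  posdef Psi ->
  (forall i, Psi i i = 1) ->
  (exists i j : 'I_p, i != j /\ Psi i j != 0) ->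
  forall b : 'rV[R]_p, (exists j : 'I_p, b 0 j = 0) ->
  spn_density Psi Omega b = +oo%E.
Proof.
move=> p0 pO pP _ _ b [j bj].
have dO := posdef_det_gt0 pO; have dP := posdef_det_gt0 pP.
set B : R := 2 + \sum_i `|b 0 i|.
have B0 : 0 <= B by rewrite addr_ge0 // sumr_ge0.
have B2 : 2 <= B by rewrite lerDl sumr_ge0.
set k := cpdf Omega B * cpdf Psi B.
have cO0 := cpdf_gt0 B dO; have cP0 := cpdf_gt0 B dP.
have k0 : 0 < k by rewrite mulr_gt0.
set P' := \prod_(i < p | i != j) (2^-1 : R).
have P'0 : 0 < P' by rewrite prodr_gt0 // => i _; rewrite invr_gt0.
have key : forall y : R, 0 < y -> ((k * (y * P'))%:E <= spn_density Psi Omega b)%E.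
  move=> y y0.
  pose e := expR (- y).
  have e0 : 0 < e by rewrite expR_gt0.
  have e1 : e < 1 by rewrite expR_lt1 oppr_lt0.
  pose gg : 'I_p -> R -> R := fun i => if i == j then @gj R e else @g1 R.
  pose GG : 'I_p -> R := fun i => if i == j then y else 2^-1.
  have prodGG : \prod_i GG i = y * P'.
    rewrite (bigD1 j) //= /GG eqxx; congr (_ * _).
    by apply: eq_bigr => i /negbTE ->.
  rewrite -prodGG -(@int_Rn_prod R p gg GG k); first last.
  - move=> i; rewrite /gg /GG; case: (i == j).
      by rewrite gj_int ?e0 ?e1 // /e expRK opprK.
    exact: g1_int.
  - by move=> i; rewrite /GG; case: (i == j); rewrite ?invr_ge0 // ltW.
  - by move=> i; rewrite /gg; case: (i == j); [apply: gj_meas | apply: g1_meas].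
  - by move=> i x; rewrite /gg; case: (i == j); [apply: gj_ge0 | apply: g1_ge0].
  - exact: ltW.
  rewrite /spn_density /int_rV; apply: le_int_Rn => t.
    rewrite lee_fin mulr_ge0 ?(ltW k0) // prodr_ge0 // => i _.
    by rewrite /gg; case: (i == j); [apply: gj_ge0 | apply: g1_ge0].
  rewrite lee_fin.
  have Pt0 : 0 <= \prod_(i < p) `|(\row_i t i) 0 i|^-1.
    by rewrite prodr_ge0 // => i _; rewrite invr_ge0.
  have pdf0 := @pdf_ge0 R p.
  case: (eqVneq (\prod_i gg i (t i)) 0) => [->|hne].
    by rewrite mulr0 !mulr_ge0.
  move/prodf_neq0: hne => hne.
  have tj : e <= t j <= 1.
    move: (hne j isT); rewrite /gg eqxx /gj /patch; case: ifP; last by rewrite eqxx.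
    by rewrite inE /= in_itv /=.
  have ti : forall i, i != j -> 1 <= t i <= 2.
    move=> i ij; move: (hne i isT); rewrite /gg (negbTE ij) /g1 /patch; case: ifP; last by rewrite eqxx.
    by rewrite inE /= in_itv /=.
  have tpos : forall i, 0 < t i.
    move=> i; case: (eqVneq i j) => [->|ij].
      by case/andP: tj => tj _; apply: lt_le_trans tj.
    by case/andP: (ti i ij) => h _; apply: lt_le_trans h.
  have tle : forall i, `|t i| <= B.
    move=> i; rewrite ger0_norm ?(ltW (tpos i)) //; apply: le_trans B2.
    case: (eqVneq i j) => [->|ij].
      by case/andP: tj => _ h; apply: le_trans h _; rewrite ler1n.
    by case/andP: (ti i ij).
  have bs : forall i, `|b 0 i / t i| <= B.
    move=> i; case: (eqVneq i j) => [->|ij].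
      by rewrite bj mul0r normr0.
    rewrite normrM normfV; case/andP: (ti i ij) => t1 _.
    have tn : 1 <= `|t i| by rewrite ger0_norm // (le_trans ler01 t1).
    apply: (@le_trans _ _ `|b 0 i|).
      rewrite ler_pdivrMr ?(lt_le_trans ltr01 tn) //.
      by rewrite ler_peMr.
    apply: le_trans (_ : \sum_i `|b 0 i| <= B); last by rewrite lerDr.
    by rewrite (bigD1 i) //= lerDl sumr_ge0.
  have h1 : \prod_i gg i (t i) <= \prod_(i < p) `|(\row_i t i) 0 i|^-1.
    apply: ler_prod => i _; rewrite mxE; apply/andP; split.
      by rewrite /gg; case: (i == j); [apply: gj_ge0 | apply: g1_ge0].
    rewrite ger0_norm ?(ltW (tpos i)) // /gg.
    case: (eqVneq i j) => [->|ij].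
      by rewrite /gj /patch ifT // inE /= in_itv /=.
    rewrite /g1 /patch ifT; last by rewrite inE /= in_itv /= ti.
    rewrite /= lef_pV2 ?posrE ?tpos //; by case/andP: (ti i ij).
  have h2 : cpdf Omega B <= Defs.normal_pdf Omega (\row_i (b 0 i / (\row_i t i) 0 i)).
    by apply: pdf_lb => // i; rewrite !mxE.
  have h3 : cpdf Psi B <= Defs.normal_pdf Psi (\row_i t i).
    by apply: pdf_lb => // i; rewrite !mxE.
  apply: (@le_trans _ _ ((\prod_(i < p) `|(\row_i t i) 0 i|^-1) * cpdf Omega B * cpdf Psi B)).
    rewrite mulrC /k mulrA; apply: ler_wpM2r; first exact: ltW.
    apply: ler_wpM2r => //; exact: ltW.
  apply: ler_pM => //; first by rewrite mulr_ge0 // ltW.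
  - exact: ltW.
  - apply: ler_pM => //; exact: ltW.
move: key; case: (spn_density Psi Omega b) => [r| |] // key.
- have y0 : 0 < (`|r| + 1) / (k * P').
    rewrite divr_gt0 ?(mulr_gt0 k0 P'0) //; have := normr_ge0 r; lra.
  have := key _ y0; rewrite lee_fin.
  have -> : k * ((`|r| + 1) / (k * P') * P') = `|r| + 1.
    by field; rewrite ?gt_eqF ?k0 ?P'0.
  move=> h; exfalso; have := ler_norm r; lra.
- have := key 1 ltr01; by rewrite leeNy_eq.
Qed.
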